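(* Let $\{p_n\}_{n\geq1}$ be real numbers with $0<p_n<p_{n+1}$ for all $n\geq1$ and $\lim_{n\to\infty}p_n=\infty$. Then there exists a real solution $\lambda_*>0$ of the continued fraction equation $$\lambda p_1=\cfrac{1}{\lambda p_2-\cfrac{1}{\lambda p_3-\cfrac{1}{\lambda p_4-\cdots}}}$$ satisfying $$\frac{1}{\sqrt{p_1p_2}}<\lambda_*<\frac{1}{\sqrt{p_1p_2-p_1^2}},$$ and, with $\lambda=\lambda_*$, the sequence $\{c_n\}$ defined by $c_1=p_1$, $\eta_2=-\lambda_*p_1$, $\eta_{n+1}=-\lambda_*p_n-1/\eta_n$ for $n\geq2$, and $c_n=p_n\eta_n\eta_{n-1}\cdots\eta_2$ for $n\geq2$, decays exponentially fast for all sufficiently large $n$ and satisfies, for $s\geq 0$, $$\|n^sc_n\|_{\ell^2(\mathbb{N})}\leq C\Big(n_0^{s}+\frac{p_2}{p_1}\Big)\|c_n\|_{\ell^2(\mathbb{N})},$$ where $n_0$ is the largest integer with $p_{n_0}\leq4p_2$ and $C>0$ is a constant.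
   Context: The infinite continued fraction is understood as follows. For $n\geq2$ and $\lambda\geq 2/p_n$ let $G_n(\lambda)=\frac{\lambda p_n-\sqrt{\lambda^2p_n^2-4}}{2}$ (formally the continued fraction with all entries $\lambda p_n$). For $n\geq2$, $k\geq0$ let $F_{n,k}(\lambda)=\cfrac{1}{\lambda p_n-\cfrac{1}{\lambda p_{n+1}-\cdots\cfrac{1}{\lambda p_{n+k}-G_{n+k+1}(\lambda)}}}$, and $F_n(\lambda)=\lim_{k\to\infty}F_{n,k}(\lambda)$ where this limit exists; the equation is $\lambda p_1=F_2(\lambda)$. *)

(* Defs.v *)
From Stdlib Require Import Reals Lra.
From Coquelicot Require Import Coquelicot.
Open Scope R_scope.

(* Sequences p are indexed from 1: p 1, p 2, ...; the value p 0 is irrelevant. *)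

(* G_n(lambda) = (lambda p_n - sqrt(lambda^2 p_n^2 - 4)) / 2,
   meaningful when lambda >= 2 / p_n. *)
Definition Gcf (p : nat -> R) (lam : R) (n : nat) : R :=
  (lam * p n - sqrt (lam ^ 2 * (p n) ^ 2 - 4)) / 2.

(* F_{n,k}(lambda): finite continued fraction with entries lambda p_n, ...,
   lambda p_{n+k} and tail G_{n+k+1}(lambda). *)
Fixpoint Fcf (p : nat -> R) (lam : R) (n k : nat) : R :=
  match k with
  | O => 1 / (lam * p n - Gcf p lam (S n))
  | S k' => 1 / (lam * p n - Fcf p lam (S n) k')
  end.

Fixpoint Fcf_defined (p : nat -> R) (lam : R) (n k : nat) : Prop :=
  match k with
  | O => lam >= 2 / p (S n) /\ lam * p n - Gcf p lam (S n) <> 0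
  | S k' => Fcf_defined p lam (S n) k' /\ lam * p n - Fcf p lam (S n) k' <> 0
  end.

Definition Fcf_lim (p : nat -> R) (lam : R) (n : nat) (L : R) : Prop :=
  (exists K : nat, forall k : nat, (K <= k)%nat -> Fcf_defined p lam n k) /\
  is_lim_seq (fun k => Fcf p lam n k) L.

Definition cf_equation (p : nat -> R) (lam : R) : Prop :=
  Fcf_lim p lam 2%nat (lam * p 1%nat).

(* eta_2 = - lambda p_1, eta_{n+1} = - lambda p_n - 1/eta_n  (n >= 2).
   eta_aux p lam m = eta_{m+2}. *)
Fixpoint eta_aux (p : nat -> R) (lam : R) (m : nat) : R :=
  match m with
  | O => - lam * p 1%nat
  | S m' => - lam * p (S (S m')) - 1 / eta_aux p lam m'
  end.

Definition eta (p : nat -> R) (lam : R) (n : nat) : R := eta_aux p lam (n - 2).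

Fixpoint eta_prod (p : nat -> R) (lam : R) (n : nat) : R :=
  match n with
  | O => 1
  | S O => 1
  | S n' => eta_prod p lam n' * eta p lam n
  end.

Definition cseq (p : nat -> R) (lam : R) (n : nat) : R :=
  p n * eta_prod p lam n.

Definition l2sq (a : nat -> R) : R := Series (fun k => (a (S k)) ^ 2).
Definition l2_finite (a : nat -> R) : Prop := ex_series (fun k => (a (S k)) ^ 2).

(* Main.v *)
Require Import Defs.
From Stdlib Require Import Reals Lra Lia Classical.
From Coquelicot Require Import Coquelicot.
Open Scope R_scope.

Definition HP (p : nat -> R) : Prop := forall n : nat, (1 <= n)%nat -> 0 < p n /\ p n < p (S n).

Lemma p_pos p : HP p -> forall n, (1 <= n)%nat -> 0 < p n.
Proof. intros H n Hn; apply (H n Hn). Qed.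

Lemma p_mono p : HP p -> forall m k, (1 <= m)%nat -> p m <= p (m + k)%nat.
Proof.
  intros H m k Hm; induction k.
  - rewrite Nat.add_0_r; lra.
  - replace (m + S k)%nat with (S (m + k)) by lia.
    destruct (H (m+k)%nat ltac:(lia)); lra.
Qed.

Lemma p_le p : HP p -> forall m n, (1 <= m)%nat -> (m <= n)%nat -> p m <= p n.
Proof.
  intros H m n Hm Hmn. replace n with (m + (n - m))%nat by lia. apply p_mono; auto.
Qed.

Lemma p_big p : is_lim_seq p p_infty -> forall B, exists N, forall n, (N <= n)%nat -> B < p n.
Proof.
  intros H B. apply is_lim_seq_spec in H. apply (H B).
Qed.

Fixpoint rho (p : nat -> R) (lam : R) (m : nat) : R :=
  match m with
  | O => lam * p 1%nat
  | S m' => lam * p (S (S m')) - 1 / rho p lam m'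
  end.

Lemma eta_rho p lam m : eta_aux p lam m = - rho p lam m.
Proof.
  induction m; simpl. ring.
  rewrite IHm. unfold Rdiv. rewrite Rinv_opp. ring.
Qed.

Definition Lam p lam : Prop := 0 < lam /\ forall m, 0 < rho p lam m.

Lemma rho_mono p : HP p -> forall l1 l2, 0 < l1 <= l2 -> (forall m, 0 < rho p l1 m) ->
  forall m, rho p l1 m <= rho p l2 m.
Proof.
  intros H l1 l2 Hl Hr m; induction m; simpl.
  - apply Rmult_le_compat_r; [ left; apply p_pos; auto | lra].
  - assert (0 < p (S (S m))) by (apply p_pos; auto; lia).
    assert (l1 * p (S (S m)) <= l2 * p (S (S m))) by (apply Rmult_le_compat_r; lra).
    assert (/ rho p l2 m <= / rho p l1 m) by (apply Rinv_le_contravar; auto).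
    unfold Rdiv; lra.
Qed.

Lemma Lam_up p : HP p -> forall l1 l2, l1 <= l2 -> Lam p l1 -> Lam p l2.
Proof.
  intros H l1 l2 Hl [H1 H2]. split; [lra|]. intro m.
  eapply Rlt_le_trans; [apply H2|]. apply rho_mono; auto; lra.
Qed.

Lemma rho_cont p : forall m lam0, (forall j, (j < m)%nat -> 0 < rho p lam0 j) ->
  continuity_pt (fun l => rho p l m) lam0.
Proof.
  induction m; intros lam0 Hj.
  - simpl. apply (continuity_pt_mult (fun x => x) (fun _ => p 1%nat)).
    apply continuity_pt_id. apply continuity_pt_const. intros a b; auto.
  - simpl.
    apply (continuity_pt_minus (fun l => l * p (S (S m))) (fun l => 1 / rho p l m)).
    apply (continuity_pt_mult (fun x => x) (fun _ => p (S (S m)))).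
    apply continuity_pt_id. apply continuity_pt_const. intros a b; auto.
    apply (continuity_pt_div (fun _ => 1) (fun l => rho p l m)).
    apply continuity_pt_const. intros a b; auto.
    apply IHm. intros j Hjm; apply Hj; lia.
    specialize (Hj m ltac:(lia)). lra.
Qed.

Lemma cont_eps f x : continuity_pt f x -> forall eps, 0 < eps ->
  exists d, 0 < d /\ forall y, Rabs (y - x) < d -> Rabs (f y - f x) < eps.
Proof.
  intros H eps He. destruct (H eps He) as [d [Hd Hy]].
  exists d; split; auto. intros y Hyx.
  destruct (Req_dec y x) as [->|Hne].
  - rewrite Rminus_diag, Rabs_R0; auto.
  - apply (Hy y). split. split; auto. exact I. exact Hyx.
Qed.

Lemma rho_fin p lam0 : Lam p lam0 -> forall m, exists d, 0 < d /\
  forall l, Rabs (l - lam0) < d -> forall j, (j <= m)%nat -> 0 < rho p l j.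
Proof.
  intros [H0 Hr] m. induction m.
  - destruct (cont_eps _ _ (rho_cont p 0 lam0 (fun j _ => Hr j)) (rho p lam0 0) (Hr 0%nat))
      as [d [Hd Hy]].
    exists d; split; auto. intros l Hl j Hj. replace j with 0%nat by lia.
    specialize (Hy l Hl). apply Rabs_def2 in Hy. lra.
  - destruct IHm as [d1 [Hd1 H1]].
    destruct (cont_eps _ _ (rho_cont p (S m) lam0 (fun j _ => Hr j)) (rho p lam0 (S m)) (Hr (S m)))
      as [d [Hd Hy]].
    exists (Rmin d d1); split. apply Rmin_pos; auto.
    intros l Hl j Hj.
    assert (Rabs (l - lam0) < d) by (eapply Rlt_le_trans; [apply Hl| apply Rmin_l]).
    assert (Rabs (l - lam0) < d1) by (eapply Rlt_le_trans; [apply Hl| apply Rmin_r]).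
    destruct (Nat.eq_dec j (S m)) as [->|Hne].
    + specialize (Hy l H). apply Rabs_def2 in Hy. lra.
    + apply H1; auto. lia.
Qed.

Lemma keyK p : HP p -> forall lam0 N, Lam p lam0 ->
  (forall m, (N <= m)%nat -> 4 <= lam0 * p (S (S m))) -> 1 < rho p lam0 N ->
  exists l, l < lam0 /\ Lam p l.
Proof.
  intros HPp lam0 N HL Hbig HN.
  destruct (rho_fin p lam0 HL N) as [d1 [Hd1 H1]].
  destruct HL as [H0 Hr].
  destruct (cont_eps _ _ (rho_cont p N lam0 (fun j _ => Hr j)) (rho p lam0 N - 1) ltac:(lra))
      as [d2 [Hd2 H2]].
  set (d := Rmin (Rmin d1 d2) lam0).
  assert (Hd : 0 < d) by (apply Rmin_pos; [apply Rmin_pos|]; auto).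
  assert (d <= d1 /\ d <= d2 /\ d <= lam0).
  { unfold d. pose proof (Rmin_l (Rmin d1 d2) lam0). pose proof (Rmin_r (Rmin d1 d2) lam0).
    pose proof (Rmin_l d1 d2). pose proof (Rmin_r d1 d2). lra. }
  set (l := lam0 - d / 2).
  assert (Habs : Rabs (l - lam0) < d).
  { unfold l. replace (lam0 - d/2 - lam0) with (- (d/2)) by ring. rewrite Rabs_Ropp.
    rewrite Rabs_pos_eq; lra. }
  exists l. split. unfold l; lra.
  split. unfold l; lra.
  assert (HlN : 1 < rho p l N).
  { specialize (H2 l ltac:(lra)). apply Rabs_def2 in H2. lra. }
  assert (Hge : forall k, 1 <= rho p l (N + k)).
  { induction k. rewrite Nat.add_0_r; lra.
    replace (N + S k)%nat with (S (N + k)) by lia. simpl.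
    assert (4 <= lam0 * p (S (S (N + k)))) by (apply Hbig; lia).
    assert (0 < p (S (S (N+k)))) by (apply p_pos; auto; lia).
    assert (2 <= l * p (S (S (N + k)))).
    { assert (lam0 / 2 <= l) by (unfold l; lra).
      apply Rle_trans with (lam0 / 2 * p (S (S (N + k)))). lra.
      apply Rmult_le_compat_r; lra. }
    assert (1 / rho p l (N + k) <= 1).
    { unfold Rdiv. rewrite Rmult_1_l. rewrite <- Rinv_1. apply Rinv_le_contravar; lra. }
    lra. }
  intro m. destruct (Compare_dec.le_lt_dec m N).
  - apply H1; auto; lra.
  - replace m with (N + (m - N))%nat by lia. specialize (Hge (m - N)%nat). lra.
Qed.

Lemma lamstar p : HP p -> is_lim_seq p p_infty ->
  exists ls, Lam p ls /\ ls < 1 / sqrt (p 1%nat * p 2%nat - (p 1%nat) ^ 2) /\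
  exists N0, forall m, (N0 <= m)%nat -> 4 <= ls * p (S (S m)) /\ rho p ls m <= 1.
Proof.
  intros HPp Hlim.
  assert (Hp1 : 0 < p 1%nat) by (apply p_pos; auto).
  assert (Hp12 : p 1%nat < p 2%nat) by (apply (HPp 1%nat); auto).
  set (x := p 1%nat * p 2%nat - p 1%nat ^ 2).
  assert (Hx : 0 < x) by (unfold x; nra).
  set (U := 1 / sqrt x).
  assert (Hsx : 0 < sqrt x) by (apply sqrt_lt_R0; auto).
  assert (HU : 0 < U) by (unfold U; apply Rdiv_lt_0_compat; lra).
  assert (HU2 : U * U * x = 1).
  { unfold U. pose proof (sqrt_sqrt x ltac:(lra)).
    replace (1 / sqrt x * (1 / sqrt x) * x) with (x / (sqrt x * sqrt x)) by (field; lra).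
    rewrite H. field. lra. }
  set (c := U * p 1%nat).
  assert (Hc : 0 < c) by (unfold c; nra).
  assert (HcU : U * p 2%nat - 1 / c = c).
  { unfold c. unfold x in HU2.
    assert (1 / (U * p 1%nat) = U * (p 2%nat - p 1%nat)).
    { apply Rmult_eq_reg_l with (U * p 1%nat). field_simplify; try lra. nra. }
    rewrite H; ring. }
  assert (Hge : forall m, c <= rho p U m).
  { induction m. simpl. unfold c; lra.
    simpl. assert (p 2%nat <= p (S (S m))) by (apply p_le; auto; lia).
    assert (U * p 2%nat <= U * p (S (S m))) by (apply Rmult_le_compat_l; lra).
    assert (/ rho p U m <= / c) by (apply Rinv_le_contravar; auto).
    unfold Rdiv in *. lra. }
  assert (HLU : Lam p U) by (split; auto; intro m; specialize (Hge m); lra).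
  destruct (p_big p Hlim ((6 + 1 / c) / U)) as [NU HNU].
  assert (HNU' : forall m, (NU <= m)%nat -> 6 + 1 / c < U * p (S (S m))).
  { intros m Hm. specialize (HNU (S (S m)) ltac:(lia)).
    apply Rmult_lt_compat_l with (r := U) in HNU; auto.
    replace (U * ((6 + 1 / c) / U)) with (6 + 1/c) in HNU by (field; lra). lra. }
  assert (H1c : 0 < 1 / c) by (apply Rdiv_lt_0_compat; lra).
  destruct (keyK p HPp U (S NU) HLU) as [l0 [Hl0 HLl0]].
  { intros m Hm. specialize (HNU' m ltac:(lia)). lra. }
  { simpl. specialize (HNU' NU ltac:(lia)). specialize (Hge NU).
    assert (/ rho p U NU <= / c) by (apply Rinv_le_contravar; auto).
    unfold Rdiv in *. lra. }
  set (E := fun y => forall l, Lam p l -> y <= l).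
  assert (HbE : bound E).
  { exists U. intros y Hy. apply Hy; auto. }
  assert (HeE : exists y, E y).
  { exists 0. intros l [Hl _]. lra. }
  destruct (completeness E HbE HeE) as [ls [Hub Hleast]].
  assert (HB : forall l, Lam p l -> ls <= l).
  { intros l Hl. apply Hleast. intros y Hy. apply Hy; auto. }
  assert (Hx0 : 1 / (p 1%nat + p 2%nat) <= ls).
  { apply Hub. intros l [Hl Hr]. destruct (Rle_or_lt (1 / (p 1%nat + p 2%nat)) l); auto.
    exfalso. specialize (Hr 1%nat). simpl in Hr.
    assert (l * (p 1%nat + p 2%nat) < 1).
    { apply Rmult_lt_compat_r with (r := p 1%nat + p 2%nat) in H; [|lra].
      replace (1 / (p 1%nat + p 2%nat) * (p 1%nat + p 2%nat)) with 1 in H by (field; lra). lra. }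
    assert (0 < l * p 1%nat < 1) by nra.
    assert (1 < 1 / (l * p 1%nat)).
    { apply Rmult_lt_reg_r with (l * p 1%nat); [lra|]. field_simplify; lra. }
    nra. }
  assert (Hls0 : 0 < ls).
  { eapply Rlt_le_trans; [|apply Hx0]. apply Rdiv_lt_0_compat; lra. }
  assert (HA : forall l, ls < l -> Lam p l).
  { intros l Hl. destruct (classic (Lam p l)) as [H|H]; auto. exfalso.
    assert (E l).
    { intros l' Hl'. destruct (Rle_or_lt l l'); auto. exfalso. apply H.
      apply Lam_up with l'; auto; lra. }
    specialize (Hub l H0). lra. }
  assert (Hpos : forall m j, (j <= m)%nat -> 0 < rho p ls j).
  { induction m; intros j Hj.
    - replace j with 0%nat by lia. simpl. nra.
    - destruct (Nat.eq_dec j (S m)) as [->|Hne]; [|apply IHm; lia].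
      destruct (Rle_or_lt (rho p ls (S m)) 0) as [Hle|Hlt]; auto. exfalso.
      set (q := p (S (S (S m)))).
      assert (Hq : 0 < q) by (apply p_pos; auto; lia).
      assert (Heps : 0 < 1 / ((ls + 1) * q)) by (apply Rdiv_lt_0_compat; nra).
      destruct (cont_eps _ _ (rho_cont p (S m) ls (fun j Hj => IHm j ltac:(lia))) _ Heps)
        as [d [Hd Hy]].
      set (l := ls + Rmin d 1 / 2).
      assert (Hm1 : 0 < Rmin d 1) by (apply Rmin_pos; lra).
      assert (Hm2 : Rmin d 1 <= d) by apply Rmin_l.
      assert (Hm3 : Rmin d 1 <= 1) by apply Rmin_r.
      assert (Hl : ls < l <= ls + 1) by (unfold l; lra).
      destruct (HA l ltac:(lra)) as [_ Hrl].
      assert (Hab : Rabs (l - ls) < d) by (rewrite Rabs_pos_eq; unfold l; lra).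
      specialize (Hy l Hab). apply Rabs_def2 in Hy.
      pose proof (Hrl (S m)) as A. pose proof (Hrl (S (S m))) as B.
      change (rho p l (S (S m))) with (l * q - 1 / rho p l (S m)) in B.
      assert (C : rho p l (S m) < 1 / ((ls + 1) * q)) by lra.
      assert (1 / ((ls + 1) * q) <= 1 / (l * q)).
      { unfold Rdiv. rewrite !Rmult_1_l. apply Rinv_le_contravar; nra. }
      assert (1 / rho p l (S m) < l * q) by lra.
      assert (1 < l * q * rho p l (S m)).
      { apply Rmult_lt_compat_r with (r := rho p l (S m)) in H0; auto.
        replace (1 / rho p l (S m) * rho p l (S m)) with 1 in H0 by (field; lra). lra. }
      assert (l * q * rho p l (S m) < l * q * (1 / (l * q))).
      { apply Rmult_lt_compat_l; nra. }
      replace (l * q * (1 / (l * q))) with 1 in H2 by (field; nra). lra. }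
  assert (HLs : Lam p ls) by (split; auto; intro m; apply (Hpos m m); lia).
  exists ls. split; auto. split. specialize (HB l0 HLl0). fold x. fold U. lra.
  destruct (p_big p Hlim (4 / ls)) as [N HN].
  exists N. intros m Hm. split.
  - specialize (HN (S (S m)) ltac:(lia)).
    apply Rmult_lt_compat_l with (r := ls) in HN; auto.
    replace (ls * (4 / ls)) with 4 in HN by (field; lra). lra.
  - destruct (Rle_or_lt (rho p ls m) 1) as [H|H]; auto. exfalso.
    destruct (keyK p HPp ls m HLs) as [l [Hl HLl]]; auto.
    { intros k Hk. specialize (HN (S (S k)) ltac:(lia)).
      apply Rmult_lt_compat_l with (r := ls) in HN; auto.
      replace (ls * (4 / ls)) with 4 in HN by (field; lra). lra. }
    specialize (HB l HLl). lra.
Qed.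

Lemma G_bounds p lam n : 4 <= lam * p n -> 0 < Gcf p lam n <= 1/2.
Proof.
  intro Ha. unfold Gcf. set (a := lam * p n) in *.
  replace (lam ^ 2 * p n ^ 2 - 4) with (a ^ 2 - 4) by (unfold a; ring).
  assert (sqrt (a ^ 2 - 4) < a).
  { assert (H: sqrt (a ^ 2) = a) by (apply sqrt_pow2; lra).
    rewrite <- H at 2. apply sqrt_lt_1_alt. split; nra. }
  assert (a - 1 <= sqrt (a ^ 2 - 4)).
  { assert (H1: sqrt ((a-1) ^ 2) = a - 1) by (apply sqrt_pow2; lra).
    rewrite <- H1. apply sqrt_le_1_alt. nra. }
  lra.
Qed.

Lemma inv_diff A B : 7/2 <= A -> 3 <= B -> Rabs (1 / A - 1 / B) <= Rabs (B - A) / 4.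
Proof.
  intros HA HB.
  replace (1 / A - 1 / B) with ((B - A) / (A * B)) by (field; lra).
  rewrite Rabs_div by nra. rewrite (Rabs_pos_eq (A * B)) by nra.
  unfold Rdiv. apply Rmult_le_compat_l. apply Rabs_pos.
  apply Rinv_le_contravar; nra.
Qed.

Section Conv.
Variable p : nat -> R.
Variable lam : R.
Hypothesis HPp : HP p.
Hypothesis Hlam : 0 < lam.
Hypothesis Hr : forall m, 0 < rho p lam m.
Variable N0 : nat.
Hypothesis HN0 : forall m, (N0 <= m)%nat -> 4 <= lam * p (S (S m)) /\ rho p lam m <= 1.

Lemma rho_back m : rho p lam m = 1 / (lam * p (S (S m)) - rho p lam (S m)).
Proof.
  simpl. pose proof (Hr m).
  replace (lam * p (S (S m)) - (lam * p (S (S m)) - 1 / rho p lam m)) with (1 / rho p lam m) by ring.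
  field; lra.
Qed.

Lemma base : forall k m, (N0 <= m)%nat ->
  Fcf_defined p lam (S (S m)) k /\ 0 < Fcf p lam (S (S m)) k <= 1/2 /\
  Rabs (Fcf p lam (S (S m)) k - rho p lam m) <= (1/4) ^ (S k).
Proof.
  induction k; intros m Hm.
  - destruct (HN0 m Hm) as [Ha Hrm]. destruct (HN0 (S m) ltac:(lia)) as [Ha' Hrm'].
    pose proof (G_bounds p lam (S (S (S m))) Ha') as HG.
    pose proof (Hr (S m)). pose proof (Hr m).
    assert (HA : 7/2 <= lam * p (S (S m)) - Gcf p lam (S (S (S m)))) by lra.
    assert (0 < p (S (S (S m)))) by (apply p_pos; auto; lia).
    split; [split|split].
    + apply Rle_ge. apply Rmult_le_reg_r with (p (S (S (S m)))); auto.
      field_simplify; lra.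
    + lra.
    + simpl Fcf. split. apply Rdiv_lt_0_compat; lra.
      apply Rmult_le_reg_r with (lam * p (S (S m)) - Gcf p lam (S (S (S m)))); [lra|].
      field_simplify; lra.
    + simpl Fcf. rewrite rho_back.
      eapply Rle_trans. apply inv_diff; lra.
      rewrite pow_1. assert (Rabs (lam * p (S (S m)) - rho p lam (S m) -
        (lam * p (S (S m)) - Gcf p lam (S (S (S m))))) <= 1).
      { apply Rabs_le. split; lra. } lra.
  - destruct (HN0 m Hm) as [Ha Hrm]. destruct (HN0 (S m) ltac:(lia)) as [Ha' Hrm'].
    destruct (IHk (S m) ltac:(lia)) as [Hd [Hf Hdiff]].
    pose proof (Hr (S m)). pose proof (Hr m).
    assert (HA : 7/2 <= lam * p (S (S m)) - Fcf p lam (S (S (S m))) k) by lra.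
    split; [split|split].
    + exact Hd.
    + lra.
    + simpl Fcf. split. apply Rdiv_lt_0_compat; lra.
      apply Rmult_le_reg_r with (lam * p (S (S m)) - Fcf p lam (S (S (S m))) k); [lra|].
      field_simplify; lra.
    + simpl Fcf. rewrite rho_back.
      eapply Rle_trans. apply inv_diff; lra.
      replace (lam * p (S (S m)) - rho p lam (S m) - (lam * p (S (S m)) - Fcf p lam (S (S (S m))) k))
        with (Fcf p lam (S (S (S m))) k - rho p lam (S m)) by ring.
      change ((1/4) ^ S (S k)) with (1/4 * (1/4) ^ (S k)). lra.
Qed.

Definition Conv m := (exists K, forall k, (K <= k)%nat -> Fcf_defined p lam (S (S m)) k) /\
  is_lim_seq (fun k => Fcf p lam (S (S m)) k) (rho p lam m).

Lemma conv_base m : (N0 <= m)%nat -> Conv m.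
Proof.
  intro Hm. split.
  - exists 0%nat. intros k _. apply (base k m Hm).
  - apply is_lim_seq_spec. intro eps.
    destruct (pow_lt_1_zero (1/4) ltac:(rewrite Rabs_pos_eq; lra) eps (cond_pos eps)) as [N HN].
    exists N. intros k Hk. eapply Rle_lt_trans. apply (base k m Hm).
    specialize (HN (S k) ltac:(lia)). rewrite Rabs_pos_eq in HN; auto.
    apply pow_le; lra.
Qed.

Lemma conv_up m : Conv (S m) -> Conv m.
Proof.
  intros [[K HK] Hl].
  pose proof (Hr m) as Hrm.
  assert (Hden : lam * p (S (S m)) - rho p lam (S m) = 1 / rho p lam m) by (simpl; ring).
  assert (Hpos : 0 < 1 / rho p lam m) by (apply Rdiv_lt_0_compat; lra).
  assert (Hlim2 : is_lim_seq (fun k => lam * p (S (S m)) - Fcf p lam (S (S (S m))) k)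
                    (lam * p (S (S m)) - rho p lam (S m))).
  { apply is_lim_seq_minus'. apply is_lim_seq_const. exact Hl. }
  split.
  - pose proof Hl as Hl'. apply is_lim_seq_spec in Hl'.
    destruct (Hl' (mkposreal _ Hpos)) as [K2 HK2]. simpl in HK2.
    exists (S (Nat.max K K2)). intros k Hk. destruct k as [|k]; [lia|].
    simpl. split. apply HK; lia.
    specialize (HK2 k ltac:(lia)). apply Rabs_def2 in HK2. lra.
  - apply is_lim_seq_incr_1.
    apply is_lim_seq_inv in Hlim2.
    2: { rewrite Hden. intro H. injection H. lra. }
    eapply is_lim_seq_ext in Hlim2.
    2: { intro k. instantiate (1 := fun k => Fcf p lam (S (S m)) (S k)). simpl.
         unfold Rdiv; ring. }
    simpl Rbar_inv in Hlim2.
    replace (/ (lam * p (S (S m)) - (lam * p (S (S m)) - 1 / rho p lam m))) with (rho p lam m) in Hlim2 by (field; lra). exact Hlim2.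
Qed.

Lemma conv_all : forall j m, (m + j = N0)%nat -> Conv m.
Proof.
  induction j; intros m Hm.
  - apply conv_base; lia.
  - apply conv_up. apply IHj. lia.
Qed.

Lemma cf_ok : cf_equation p lam.
Proof.
  destruct (conv_all N0 0 ltac:(lia)) as [H1 H2]. split; auto.
Qed.

End Conv.

Lemma eta_SS p lam m : eta p lam (S (S m)) = - rho p lam m.
Proof. unfold eta. replace (S (S m) - 2)%nat with m by lia. apply eta_rho. Qed.

Lemma cstep p lam m : HP p -> 0 < lam -> (forall k, 0 < rho p lam k) ->
  4 <= lam * p (S m) -> 4 <= lam * p (S (S m)) -> rho p lam (S m) <= 1 ->
  Rabs (cseq p lam (S (S m))) <= Rabs (cseq p lam (S m)) / 3.
Proof.
  intros HPp Hl Hr H1 H2 H3.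
  unfold cseq. change (eta_prod p lam (S (S m))) with (eta_prod p lam (S m) * eta p lam (S (S m))).
  rewrite eta_SS. set (X := eta_prod p lam (S m)).
  assert (HP1 : 0 < p (S m)) by (apply p_pos; auto; lia).
  assert (HP2 : 0 < p (S (S m))) by (apply p_pos; auto; lia).
  pose proof (Hr m) as Hm. pose proof (Hr (S m)) as HSm.
  assert (Hid : rho p lam m * (lam * p (S (S m)) - rho p lam (S m)) = 1).
  { simpl. field. lra. }
  assert (Hr13 : rho p lam m <= 1/3).
  { assert (rho p lam m * 3 <= 1) by nra. lra. }
  assert (HA : 3 * (lam * (p (S (S m)) * rho p lam m)) <= 4) by nra.
  assert (HB : p (S (S m)) * rho p lam m <= p (S m) / 3).
  { apply Rmult_le_reg_l with lam; auto. lra. }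
  rewrite !Rabs_mult. rewrite Rabs_Ropp.
  rewrite (Rabs_pos_eq (p (S (S m)))) by lra. rewrite (Rabs_pos_eq (p (S m))) by lra.
  rewrite (Rabs_pos_eq (rho p lam m)) by lra.
  pose proof (Rabs_pos X). nra.
Qed.

Lemma cdec p lam M : HP p -> 0 < lam -> (forall k, 0 < rho p lam k) ->
  (forall m, (M <= m)%nat -> 4 <= lam * p (S m) /\ 4 <= lam * p (S (S m)) /\ rho p lam (S m) <= 1) ->
  forall j, Rabs (cseq p lam (S M + j)) <= (1/3) ^ j * Rabs (cseq p lam (S M)).
Proof.
  intros HPp Hl Hr HM j. induction j.
  - rewrite Nat.add_0_r. simpl. lra.
  - replace (S M + S j)%nat with (S (S (M + j))) by lia.
    destruct (HM (M + j)%nat ltac:(lia)) as [A [B C]].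
    eapply Rle_trans. apply cstep; auto.
    change (S (M + j)) with (S M + j)%nat. change ((1/3)^(S j)) with (1/3 * (1/3)^j). lra.
Qed.

Lemma exp_le x y : x <= y -> exp x <= exp y.
Proof. intro H. destruct (Rle_lt_or_eq_dec x y H). left; apply exp_increasing; auto. subst; lra. Qed.

Lemma ln_le_m1 y : 0 < y -> ln y <= y - 1.
Proof. intro H. pose proof (exp_ineq1_le (ln y)). rewrite exp_ln in H0; auto. lra. Qed.

Definition Dc (s : R) : R := exp (2 * ln 3 + 2 * s * ln (2 * s / ln 3 + 1)).

Lemma ln3_pos : 0 < ln 3.
Proof. rewrite <- ln_1. apply ln_increasing; lra. Qed.

Lemma Rpower_sq x s : (Rpower x s) ^ 2 = exp (2 * s * ln x).
Proof. unfold Rpower. simpl. rewrite Rmult_1_r, <- exp_plus. f_equal. ring. Qed.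

Lemma weight_growth s n0 j : 0 <= s -> (1 <= n0)%nat ->
  (Rpower (INR (S n0 + j)) s) ^ 2 <= (Rpower (INR n0) s) ^ 2 * Dc s * 3 ^ j.
Proof.
  intros Hs Hn0. rewrite !Rpower_sq. unfold Dc.
  rewrite <- (Rpower_pow j 3) by lra. unfold Rpower.
  rewrite <- !exp_plus. apply exp_le.
  pose proof ln3_pos as Hl3.
  assert (HN0 : 1 <= INR n0) by (apply (le_INR 1); auto).
  assert (HJ : 0 <= INR j) by apply pos_INR.
  assert (Hn : INR (S n0 + j) = INR n0 + 1 + INR j) by (rewrite plus_INR, S_INR; ring).
  assert (Hln : ln (INR (S n0 + j)) <= ln (INR n0) + ln (INR j + 2)).
  { rewrite <- ln_mult by lra. apply ln_le. rewrite Hn; lra. rewrite Hn; nra. }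
  set (m := 2 * s / ln 3 + 1).
  assert (Hm : 1 <= m).
  { unfold m. assert (0 <= 2 * s / ln 3) by (apply Rdiv_le_0_compat; lra). lra. }
  assert (Hq : 2 * s / m <= ln 3).
  { apply Rmult_le_reg_r with m; [lra|]. unfold Rdiv. rewrite Rmult_assoc, Rinv_l, Rmult_1_r by lra.
    unfold m. field_simplify; lra. }
  assert (Hlnj : ln (INR j + 2) <= (INR j + 2) / m - 1 + ln m).
  { replace (ln (INR j + 2)) with (ln ((INR j + 2) / m) + ln m).
    pose proof (ln_le_m1 ((INR j + 2) / m) ltac:(apply Rdiv_lt_0_compat; lra)). lra.
    rewrite <- ln_mult. f_equal. field. lra. apply Rdiv_lt_0_compat; lra. lra. }
  assert (H2 : 2 * s * ((INR j + 2) / m) <= (INR j + 2) * ln 3).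
  { replace (2 * s * ((INR j + 2) / m)) with ((INR j + 2) * (2 * s / m)) by (field; lra).
    apply Rmult_le_compat_l; lra. }
  assert (2 * s * ln (INR (S n0 + j)) <= 2 * s * ln (INR n0) + 2 * s * ln (INR j + 2))
    by nra.
  assert (2 * s * ln (INR j + 2) <= 2 * s * ((INR j + 2) / m - 1 + ln m)) by nra.
  nra.
Qed.

Lemma sum_n_nonneg (a : nat -> R) N : (forall k, 0 <= a k) -> 0 <= sum_n a N.
Proof.
  intro H. induction N. rewrite sum_O; auto.
  rewrite sum_Sn. change (plus (sum_n a N) (a (S N))) with (sum_n a N + a (S N)).
  pose proof (H (S N)); lra.
Qed.

Lemma sum_n_mono (a : nat -> R) N k : (forall k, 0 <= a k) -> sum_n a N <= sum_n a (N + k).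
Proof.
  intro H. induction k. rewrite Nat.add_0_r; lra.
  replace (N + S k)%nat with (S (N + k)) by lia.
  rewrite sum_Sn. change (plus (sum_n a (N + k)) (a (S (N + k)))) with (sum_n a (N + k) + a (S (N + k))).
  pose proof (H (S (N + k))); lra.
Qed.

Lemma sum_n_le_loc' (a b : nat -> R) N : (forall k, (k <= N)%nat -> a k <= b k) -> sum_n a N <= sum_n b N.
Proof.
  intro H. induction N. rewrite !sum_O; auto.
  rewrite !sum_Sn. change (plus (sum_n a N) (a (S N))) with (sum_n a N + a (S N)).
  change (plus (sum_n b N) (b (S N))) with (sum_n b N + b (S N)).
  pose proof (H (S N) ltac:(lia)). assert (sum_n a N <= sum_n b N) by (apply IHN; intros; apply H; lia).
  lra.
Qed.

Lemma sum_n_scale (a : nat -> R) E N : sum_n (fun k => E * a k) N = E * sum_n a N.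
Proof.
  induction N. rewrite !sum_O; auto.
  rewrite !sum_Sn. change (plus (sum_n (fun k => E * a k) N) (E * a (S N)) = E * plus (sum_n a N) (a (S N))).
  rewrite IHN. change (E * sum_n a N + E * a (S N) = E * (sum_n a N + a (S N))). ring.
Qed.

Lemma l2_abstract (w c : nat -> R) n0 D : 0 <= D -> (1 <= n0)%nat ->
  (forall n, (1 <= n <= n0)%nat -> 0 <= w n <= w n0) ->
  (forall j, (w (S n0 + j)%nat) ^ 2 <= (w n0) ^ 2 * D * 3 ^ j) ->
  (forall n, (1 <= n)%nat -> 1 <= w n) ->
  (forall j, Rabs (c (S n0 + j)%nat) <= (1/3) ^ j * Rabs (c (S n0))) ->
  ex_series (fun k => (w (S k) * c (S k)) ^ 2) /\ ex_series (fun k => (c (S k)) ^ 2) /\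
  Series (fun k => (w (S k) * c (S k)) ^ 2) <= (w n0) ^ 2 * (1 + 3/2 * D) * Series (fun k => (c (S k)) ^ 2).
Proof.
  intros HD Hn0 W1 W2 W3 Hc.
  set (b := fun k => (w (S k) * c (S k)) ^ 2).
  set (a := fun k => (c (S k)) ^ 2).
  set (E0 := (w n0) ^ 2).
  assert (Hb0 : forall k, 0 <= b k) by (intro; unfold b; apply pow2_ge_0).
  assert (Ha0 : forall k, 0 <= a k) by (intro; unfold a; apply pow2_ge_0).
  assert (HE0 : 0 <= E0) by (unfold E0; apply pow2_ge_0).
  assert (Hab : forall k, a k <= b k).
  { intro k. unfold a, b. rewrite Rpow_mult_distr. pose proof (W3 (S k) ltac:(lia)).
    pose proof (pow2_ge_0 (c (S k))). assert (1 <= w (S k) ^ 2) by nra. nra. }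
  assert (Hfirst : sum_n b (n0 - 1) <= E0 * sum_n a (n0 - 1)).
  { rewrite <- sum_n_scale. apply sum_n_le_loc'. intros k Hk.
    unfold b, a, E0.
    rewrite Rpow_mult_distr. destruct (W1 (S k) ltac:(lia)).
    apply Rmult_le_compat_r. apply pow2_ge_0. apply pow_incr; auto. }
  assert (Hgeo : forall j, sum_n b (n0 + j) <=
     E0 * (sum_n a (n0 - 1) + D * a n0 * (3/2) * (1 - (1/3) ^ (S j)))).
  { induction j.
    - rewrite Nat.add_0_r. replace n0 with (S (n0 - 1)) at 1 by lia. rewrite sum_Sn.
      change (plus (sum_n b (n0 - 1)) (b (S (n0 - 1)))) with (sum_n b (n0 - 1) + b (S (n0 - 1))).
      replace (S (n0 - 1)) with n0 by lia.
      assert (b n0 <= E0 * D * a n0).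
      { unfold b, a, E0. rewrite Rpow_mult_distr. pose proof (W2 0%nat) as H.
        rewrite Nat.add_0_r in H. rewrite pow_O in H. rewrite Rmult_1_r in H.
        apply Rmult_le_compat_r. apply pow2_ge_0. exact H. }
      rewrite pow_1. lra.
    - replace (n0 + S j)%nat with (S (n0 + j)) by lia. rewrite sum_Sn.
      change (plus (sum_n b (n0 + j)) (b (S (n0 + j)))) with (sum_n b (n0 + j) + b (S (n0 + j))).
      assert (b (S (n0 + j)) <= E0 * D * a n0 * (1/3) ^ (S j)).
      { unfold b, a, E0. rewrite Rpow_mult_distr.
        replace (S (S (n0 + j))) with (S n0 + S j)%nat by lia.
        pose proof (W2 (S j)) as H. pose proof (Hc (S j)) as H'.
        assert (Hsq : c (S n0 + S j)%nat ^ 2 <= ((1/3) ^ S j) ^ 2 * c (S n0) ^ 2).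
        { rewrite <- Rpow_mult_distr. rewrite <- (pow2_abs (c (S n0 + S j)%nat)).
          rewrite <- (pow2_abs ((1/3) ^ S j * c (S n0))).
          apply pow_incr. split. apply Rabs_pos. rewrite Rabs_mult.
          rewrite (Rabs_pos_eq ((1/3) ^ S j)); auto. apply pow_le; lra. }
        assert (H3 : 3 ^ S j * ((1/3) ^ S j) ^ 2 = (1/3) ^ S j).
        { assert (H3a : 3 ^ S j * (1/3) ^ S j = 1).
          { rewrite <- Rpow_mult_distr. replace (3 * (1/3)) with 1 by field. apply pow1. }
          replace (3 ^ S j * ((1/3) ^ S j) ^ 2) with ((3 ^ S j * (1/3) ^ S j) * (1/3) ^ S j) by ring.
          rewrite H3a; ring. }
        pose proof (pow2_ge_0 (c (S n0 + S j)%nat)).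
        pose proof (pow2_ge_0 (w (S n0 + S j)%nat)).
        apply Rle_trans with ((w n0 ^ 2 * D * 3 ^ S j) * (((1/3) ^ S j) ^ 2 * c (S n0) ^ 2)).
        apply Rmult_le_compat; auto.
        replace (w n0 ^ 2 * D * c (S n0) ^ 2 * (1/3) ^ S j) with
          (w n0 ^ 2 * D * c (S n0) ^ 2 * (3 ^ S j * ((1/3) ^ S j) ^ 2)) by (rewrite H3; reflexivity).
        right; ring. }
      change ((1/3) ^ S (S j)) with (1/3 * (1/3) ^ S j). nra. }
  set (X := E0 * (1 + 3/2 * D) * sum_n a n0).
  assert (HsaN : sum_n a n0 = sum_n a (n0 - 1) + a n0).
  { replace n0 with (S (n0 - 1)) at 1 by lia. rewrite sum_Sn. replace (S (n0 - 1)) with n0 by lia. reflexivity. }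
  assert (HbX : forall N, sum_n b N <= X).
  { intro N. eapply Rle_trans. apply (sum_n_mono b N n0); auto.
    rewrite Nat.add_comm. eapply Rle_trans. apply Hgeo.
    unfold X. rewrite HsaN.
    pose proof (sum_n_nonneg a (n0 - 1) Ha0). pose proof (Ha0 n0).
    assert (0 <= (1/3) ^ S N) by (apply pow_le; lra).
    assert (0 <= D * a n0) by nra.
    assert (D * a n0 * (3/2) * (1 - (1/3) ^ S N) <= 3/2 * D * (sum_n a (n0 - 1) + a n0)) by nra.
    apply Rle_trans with (E0 * ((1 + 3/2*D) * (sum_n a (n0-1) + a n0))).
    apply Rmult_le_compat_l; auto. nra. right; ring. }
  assert (Hincb : forall n, sum_n b n <= sum_n b (S n)).
  { intro n. rewrite sum_Sn. change (plus (sum_n b n) (b (S n))) with (sum_n b n + b (S n)).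
    pose proof (Hb0 (S n)); lra. }
  destruct (ex_finite_lim_seq_incr (sum_n b) X Hincb HbX) as [lb Hlb].
  assert (Hexb : ex_series b) by (exists lb; exact Hlb).
  assert (Hexa : ex_series a).
  { apply (@ex_series_le R_AbsRing R_CompleteNormedModule a b); auto. intro n. change (norm (a n)) with (Rabs (a n)).
    rewrite Rabs_pos_eq; auto. }
  split; auto. split; auto.
  destruct Hexa as [la Hla].
  rewrite (is_series_unique b lb Hlb). rewrite (is_series_unique a la Hla).
  assert (lb <= X).
  { assert (H := is_lim_seq_le (sum_n b) (fun _ => X) lb X HbX Hlb (is_lim_seq_const X)).
    exact H. }
  assert (sum_n a n0 <= la).
  { apply (is_lim_seq_incr_compare (sum_n a) la Hla). intro n. rewrite sum_Sn.
    change (plus (sum_n a n) (a (S n))) with (sum_n a n + a (S n)). pose proof (Ha0 (S n)); lra. }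
  unfold X in *. assert (0 <= E0 * (1 + 3/2 * D)) by nra.
  fold E0. nra.
Qed.

Theorem theorem2p2 :
  exists C : R -> R, (forall s : R, 0 <= s -> 0 < C s) /\
  forall p : nat -> R,
    (forall n : nat, (1 <= n)%nat -> 0 < p n /\ p n < p (S n)) ->
    is_lim_seq p p_infty ->
    exists lam : R,
      0 < lam /\
      cf_equation p lam /\
      1 / sqrt (p 1%nat * p 2%nat) < lam /\
      lam < 1 / sqrt (p 1%nat * p 2%nat - (p 1%nat) ^ 2) /\
      (exists (K r : R) (N : nat), 0 < r < 1 /\
         forall n : nat, (N <= n)%nat -> Rabs (cseq p lam n) <= K * r ^ n) /\
      (forall (s : R) (n0 : nat), 0 <= s ->
         (1 <= n0)%nat -> p n0 <= 4 * p 2%nat ->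
         (forall m : nat, (1 <= m)%nat -> p m <= 4 * p 2%nat -> (m <= n0)%nat) ->
         l2_finite (fun n => Rpower (INR n) s * cseq p lam n) /\
         l2_finite (cseq p lam) /\
         sqrt (l2sq (fun n => Rpower (INR n) s * cseq p lam n))
           <= C s * (Rpower (INR n0) s + p 2%nat / p 1%nat) * sqrt (l2sq (cseq p lam))).
Proof.
  exists (fun s => sqrt (1 + 3/2 * Dc s)).
  assert (HD : forall s, 0 < Dc s) by (intro; unfold Dc; apply exp_pos).
  split. { intros s _. apply sqrt_lt_R0. pose proof (HD s). lra. }
  intros p Hp Hlim.
  assert (HPp : HP p) by exact Hp.
  destruct (lamstar p HPp Hlim) as [ls [[Hls Hr] [HU [N0 HN0]]]].
  assert (Hp1 : 0 < p 1%nat) by (apply p_pos; auto).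
  assert (Hp12 : p 1%nat < p 2%nat) by (apply (HPp 1%nat); auto).
  assert (Hq : 1 < ls ^ 2 * (p 1%nat * p 2%nat)).
  { pose proof (Hr 1%nat) as H. simpl in H.
    assert (0 < ls * p 1%nat) by nra.
    assert (1 / (ls * p 1%nat) < ls * p 2%nat) by lra.
    apply Rmult_lt_compat_l with (r := ls * p 1%nat) in H1; auto.
    replace (ls * p 1%nat * (1 / (ls * p 1%nat))) with 1 in H1 by (field; lra).
    replace (ls ^ 2 * (p 1%nat * p 2%nat)) with (ls * p 1%nat * (ls * p 2%nat)) by ring. lra. }
  assert (Hlp2 : 1 < ls * p 2%nat).
  { assert (ls ^ 2 * (p 1%nat * p 2%nat) <= (ls * p 2%nat) * (ls * p 2%nat)).
    { replace (ls ^ 2 * (p 1%nat * p 2%nat)) with ((ls * ls * p 2%nat) * p 1%nat) by ring.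
      replace ((ls * p 2%nat) * (ls * p 2%nat)) with ((ls * ls * p 2%nat) * p 2%nat) by ring.
      apply Rmult_le_compat_l; [|lra]. assert (0 < ls * ls) by nra. nra. }
    assert (0 < ls * p 2%nat) by nra.
    destruct (Rle_or_lt (ls * p 2%nat) 1); auto. nra. }
  exists ls. split; auto. split. { eapply cf_ok; eauto. }
  split.
  { assert (Hs : 0 < sqrt (p 1%nat * p 2%nat)) by (apply sqrt_lt_R0; nra).
    assert (Hsq : sqrt (ls ^ 2 * (p 1%nat * p 2%nat)) = ls * sqrt (p 1%nat * p 2%nat)).
    { rewrite sqrt_mult_alt by nra. rewrite sqrt_pow2 by lra. reflexivity. }
    assert (1 < ls * sqrt (p 1%nat * p 2%nat)).
    { rewrite <- Hsq. rewrite <- sqrt_1. apply sqrt_lt_1_alt. lra. }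
    apply Rmult_lt_reg_r with (sqrt (p 1%nat * p 2%nat)); auto.
    replace (1 / sqrt (p 1%nat * p 2%nat) * sqrt (p 1%nat * p 2%nat)) with 1 by (field; lra). lra. }
  split; auto.
  split.
  { set (M := S (S N0)).
    assert (Hdec := cdec p ls (S N0) HPp Hls Hr).
    exists (Rabs (cseq p ls M) * 3 ^ M), (1/3), M. split. lra.
    intros n Hn.
    assert (H := Hdec (fun m Hm => match HN0 (pred m) ltac:(lia) with conj A _ =>
                  conj (eq_ind (S (S (pred m))) (fun k => 4 <= ls * p k) A (S m) ltac:(lia))
                   (conj (proj1 (HN0 m ltac:(lia))) (proj2 (HN0 (S m) ltac:(lia)))) end) (n - M)%nat).
    replace (S (S N0) + (n - M))%nat with n in H by (unfold M; lia).
    fold M in H. eapply Rle_trans; [apply H|].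
    replace n with (M + (n - M))%nat at 2 by lia. rewrite pow_add.
    assert (3 ^ M * (1/3) ^ M = 1).
    { rewrite <- Rpow_mult_distr. replace (3 * (1/3)) with 1 by field. apply pow1. }
    assert (0 <= (1/3) ^ (n - M)) by (apply pow_le; lra).
    pose proof (Rabs_pos (cseq p ls M)).
    replace (Rabs (cseq p ls M) * 3 ^ M * ((1/3) ^ M * (1/3) ^ (n - M)))
      with ((3 ^ M * (1/3) ^ M) * ((1/3) ^ (n - M) * Rabs (cseq p ls M))) by ring.
    rewrite H0. lra. }
  intros s n0 Hs Hn0 Hpn0 Hmax.
  assert (Hbig : forall n, (n0 < n)%nat -> 4 < ls * p n).
  { intros n Hn. destruct (Rle_or_lt (p n) (4 * p 2%nat)) as [H|H].
    - specialize (Hmax n ltac:(lia) H). lia.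
    - nra. }
  assert (Hdown : forall d m, (m + d = N0)%nat -> (n0 < S (S m))%nat -> rho p ls m <= 1).
  { induction d; intros m Hm Hmn.
    - apply (HN0 m). lia.
    - assert (H1 : rho p ls (S m) <= 1) by (apply IHd; lia).
      pose proof (Hr m). pose proof (Hr (S m)).
      assert (Hid : rho p ls m * (ls * p (S (S m)) - rho p ls (S m)) = 1).
      { simpl. field. lra. }
      pose proof (Hbig (S (S m)) Hmn). nra. }
  assert (Hle1 : forall m, (n0 < S (S m))%nat -> rho p ls m <= 1).
  { intros m Hm. destruct (Compare_dec.le_lt_dec N0 m).
    - apply (HN0 m); auto.
    - apply (Hdown (N0 - m)%nat m); lia. }
  assert (Hc := cdec p ls n0 HPp Hls Hr
     (fun m Hm => conj (Rlt_le _ _ (Hbig (S m) ltac:(lia)))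
       (conj (Rlt_le _ _ (Hbig (S (S m)) ltac:(lia))) (Hle1 (S m) ltac:(lia))))).
  set (w := fun n : nat => Rpower (INR n) s).
  assert (W3 : forall n, (1 <= n)%nat -> 1 <= w n).
  { intros n Hn. unfold w, Rpower. pose proof (exp_ineq1_le (s * ln (INR n))).
    assert (0 <= ln (INR n)).
    { rewrite <- ln_1. apply ln_le. lra. apply (le_INR 1); auto. }
    nra. }
  assert (W1 : forall n, (1 <= n <= n0)%nat -> 0 <= w n <= w n0).
  { intros n Hn. pose proof (W3 n ltac:(lia)). split. lra.
    unfold w. apply Rle_Rpower_l; auto. split. apply (lt_INR 0); lia. apply le_INR; lia. }
  assert (W2 : forall j, (w (S n0 + j)%nat) ^ 2 <= (w n0) ^ 2 * Dc s * 3 ^ j).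
  { intro j. unfold w. apply weight_growth; auto. }
  destruct (l2_abstract w (cseq p ls) n0 (Dc s) (Rlt_le _ _ (HD s)) Hn0 W1 W2 W3 Hc)
    as [Hb [Ha Hineq]].
  split. exact Hb. split. exact Ha.
  unfold l2sq. fold w.
  set (Sb := Series (fun k => (w (S k) * cseq p ls (S k)) ^ 2)) in *.
  set (Sa := Series (fun k => (cseq p ls (S k)) ^ 2)) in *.
  set (C := sqrt (1 + 3/2 * Dc s)).
  assert (HC : C * C = 1 + 3/2 * Dc s) by (apply sqrt_sqrt; pose proof (HD s); lra).
  assert (HC0 : 0 <= C) by apply sqrt_pos.
  assert (Hw0 : 0 <= w n0) by (pose proof (W3 n0 Hn0); lra).
  assert (Hsb : sqrt Sb <= sqrt ((w n0 * C) ^ 2 * Sa)).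
  { apply sqrt_le_1_alt. rewrite Rpow_mult_distr. replace (C ^ 2) with (C * C) by ring.
    rewrite HC. exact Hineq. }
  rewrite sqrt_mult_alt in Hsb by apply pow2_ge_0.
  rewrite sqrt_pow2 in Hsb by nra.
  assert (0 < p 2%nat / p 1%nat) by (apply Rdiv_lt_0_compat; lra).
  pose proof (sqrt_pos Sa). eapply Rle_trans; [exact Hsb|].
  assert (0 <= C * (p 2%nat / p 1%nat) * sqrt Sa).
  { apply Rmult_le_pos; auto. apply Rmult_le_pos; lra. }
  unfold w in *.
  replace (C * (Rpower (INR n0) s + p 2%nat / p 1%nat) * sqrt Sa) with
    (Rpower (INR n0) s * C * sqrt Sa + C * (p 2%nat / p 1%nat) * sqrt Sa) by ring.
  lra.
Qed.
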